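(* Let $W$ be the affine Weyl group of type $A_n^{(1)}$, let $w\in W$ and $j\in\{1,\dots,n\}$. Then (1) $\mathcal{L}_{\Lambda_0}(w)=\mathcal{L}_{\Lambda_0}(\sigma_jw)=\mathcal{L}_{\Lambda_0}(\sigma_1^jw)$; (2) $\mathcal{L}_{\Lambda_0}(wf^j)=\mathcal{L}_{\Lambda_0}(\pi_j(w))$, where $f=[\omega_1]$.
   Context: Affine Kac–Moody setting of type $A_n^{(1)}$: $\mathfrak h^*$ contains simple roots $\alpha_0,\dots,\alpha_n$, the null root $\delta=\sum_{i=0}^n\alpha_i$, the affine fundamental weight $\Lambda_0$; $c=\sum_i\alpha_i^\vee$ is the canonical central element, $\rho^\vee\in\mathfrak h$ satisfies $\langle\alpha_i,\rho^\vee\rangle=1$ for all $0\le i\le n$, and $h=n+1$. The finite part $V_0=\bigoplus_{i=1}^n\mathbb{R}\alpha_i$ is identified with $\{x\in\mathbb{R}^{n+1}\mid\sum x_i=0\}$ via $\alpha_i=\varepsilon_i-\varepsilon_{i+1}$, with standard dot product $(\cdot|\cdot)$ (extended to the standard invariant form on $\mathfrak h^*$). For $x\in V_0$, $t_x(v)=v+\langle v,c\rangle x-((v|x)+\frac12|x|^2\langle v,c\rangle)\delta$. $W_0=\langle s_1,\dots,s_n\rangle\cong S_{n+1}$, $M=V_0\cap\mathbb{Z}^{n+1}$, $W=\langle s_0,\dots,s_n\rangle=T(M)\rtimes W_0$. Fundamental weights $\omega_i=(\varepsilon_1+\dots+\varepsilon_i)-\frac{i}{n+1}(\varepsilon_1+\dots+\varepsilon_{n+1})$,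 $L=\bigoplus_i\mathbb{Z}\omega_i$, extended affine Weyl group $\widehat W=T(L)\rtimes W_0$, fundamental group $F=L/M$. For $j\in\{1,\dots,n\}$, $\sigma_j=t_{\omega_j}w_{0,j}w_0$, where $w_0$ is the longest element of $W_0$ and $w_{0,j}$ the longest element of the parabolic subgroup generated by $\{s_i\mid 1\le i\le n, i\ne j\}$; $\sigma_0=e$. Conjugation by $\sigma_j$ permutes $\{s_0,\dots,s_n\}$, and $\pi_j(w)=\sigma_j^{-1}w\sigma_j\in W$. For $g\in GL(\mathfrak h^* )$, $\mathcal{L}_{\Lambda_0}(g)=\langle\Lambda_0-g\Lambda_0,\rho^\vee\rangle$. The element $wf^j$ of $W\rtimes F$ (with $F$ acting through $[\omega_j]\mapsto\sigma_j$) has atomic length defined as $\mathcal{L}_{\Lambda_0}(wf^j):=\mathcal{L}_{\Lambda_0}(\sigma_j\pi_j(w))$, where $f^j=[\omega_j]$ corresponds to $\sigma_j$. *)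

(* Defs.v *)
From HB Require Import structures.
From mathcomp Require Import all_boot all_order all_algebra.
Set Implicit Arguments. Unset Strict Implicit. Unset Printing Implicit Defensive.
Import Order.TTheory GRing.Theory Num.Theory.
Local Open Scope ring_scope.

Section Affine.
Variables (R : realFieldType) (n : nat).

(* An element x + a*Lambda_0 + b*delta of h^*, where x is the finite part,
   written in the coordinates eps_1..eps_{n+1} (indices 0..n). *)
Record hs := HS { hx : 'rV[R]_(n.+1); hL : R; hd : R }.

Definition hadd (u v : hs) : hs := HS (hx u + hx v) (hL u + hL v) (hd u + hd v).
Definition hscale (k : R) (u : hs) : hs := HS (k *: hx u) (k * hL u) (k * hd u).
Definition hsub (u v : hs) : hs := hadd u (hscale (-1) v).

Definition dot (x y : 'rV[R]_(n.+1)) : R := \sum_(k < n.+1) x 0 k * y 0 k.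

(* standard invariant form: (x|y) standard, (Lambda0|delta)=1,
   (Lambda0|Lambda0)=(delta|delta)=0, finite part orthogonal to both *)
Definition form (u v : hs) : R := dot (hx u) (hx v) + hL u * hd v + hd u * hL v.

Definition Lambda0 : hs := HS 0 1 0.
Definition delta : hs := HS 0 0 1.

(* theta = eps_1 - eps_{n+1} ; alpha_0 = delta - theta ;
   alpha_i = eps_i - eps_{i+1} for 1 <= i <= n *)
Definition theta : 'rV[R]_(n.+1) :=
  \row_(k < n.+1) (((val k == 0%N) : nat)%:R - ((val k == n) : nat)%:R).
Definition alpha (i : nat) : hs :=
  if i == 0%N then HS (- theta) 0 1
  else HS (\row_(k < n.+1) (((val k == i.-1) : nat)%:R - ((val k == i) : nat)%:R)) 0 0.

(* simple reflections s_i v = v - <v, alpha_i^vee> alpha_i = v - (v|alpha_i) alpha_i *)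
Definition sref (i : nat) (v : hs) : hs := hsub v (hscale (form v (alpha i)) (alpha i)).

Definition inW (w : hs -> hs) : Prop :=
  exists l : seq nat, all (fun i => (i <= n)%N) l /\
    forall v, w v = foldr (fun i g => sref i \o g) id l v.

(* translation t_x(v) = v + <v,c> x - ((v|x) + 1/2 |x|^2 <v,c>) delta *)
Definition transl (x : 'rV[R]_(n.+1)) (v : hs) : hs :=
  HS (hx v + hL v *: x) (hL v)
     (hd v - (dot (hx v) x + 2%:R^-1 * dot x x * hL v)).

Definition omega (j : nat) : 'rV[R]_(n.+1) :=
  \row_(k < n.+1) (((val k < j)%N : nat)%:R - j%:R / (n.+1)%:R).

(* action of an element of W_0 = S_{n+1} given by a coordinate involution p *)
Definition pact (p : 'I_n.+1 -> 'I_n.+1) (v : hs) : hs :=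
  HS (\row_(k < n.+1) hx v 0 (p k)) (hL v) (hd v).

(* longest element w_0 of S_{n+1}: reversal of the coordinates *)
Definition w0 : hs -> hs := pact (@rev_ord n.+1).
(* longest element w_{0,j} of the parabolic subgroup <s_i | i <> j> = S_j x S_{n+1-j}:
   reverses coordinates 0..j-1 and j..n separately *)
Definition w0j (j : nat) : hs -> hs :=
  pact (fun k : 'I_n.+1 =>
          inord (if (val k < j)%N then (j.-1 - val k)%N else (j + n - val k)%N)).

Definition sigma (j : nat) : hs -> hs := transl (omega j) \o w0j j \o w0.
Definition sigma_inv (j : nat) : hs -> hs := w0 \o w0j j \o transl (- omega j).

Definition pi_ (j : nat) (w : hs -> hs) : hs -> hs := sigma_inv j \o w \o sigma j.

(* rho^vee : a linear functional on h^* with <alpha_i, rho^vee> = 1, 0 <= i <= n *)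
Definition is_rho_check (phi : hs -> R) : Prop :=
  [/\ forall u v, phi (hadd u v) = phi u + phi v,
      forall k u, phi (hscale k u) = k * phi u &
      forall i, (i <= n)%N -> phi (alpha i) = 1].

Definition atomic_length (phi : hs -> R) (g : hs -> hs) : R :=
  phi (hsub Lambda0 (g Lambda0)).

(* L_{Lambda0}(w f^j) := L_{Lambda0}(sigma_j pi_j(w)) *)
Definition atomic_length_ext (phi : hs -> R) (w : hs -> hs) (j : nat) : R :=
  atomic_length phi (sigma j \o pi_ j w).

End Affine.

(* Main.v *)
Require Import Defs.
From HB Require Import structures.
From mathcomp Require Import all_boot all_order all_algebra.
From mathcomp Require Import zify ring lra.
Set Implicit Arguments. Unset Strict Implicit. Unset Printing Implicit Defensive.
Import Order.TTheory GRing.Theory Num.Theory.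
Local Open Scope ring_scope.

Definition Ssum {R : realFieldType} {n : nat} (v : hs R n) : R := \sum_(k < n.+1) hx v 0 k.
Definition Inv {R : realFieldType} {n : nat} (v : hs R n) := hL v = 1 /\ Ssum v = 0.

Lemma sum_ind (R : realFieldType) (N m : nat) (G : nat -> R) : (m < N)%N ->
  \sum_(k < N) ((val k == m) : nat)%:R * G (val k) = G m.
Proof.
move=> hm; rewrite (bigD1 (Ordinal hm)) //= eqxx mul1r big1 ?addr0 // => k hk.
have -> : (val k == m) = false.
  by apply/negbTE; apply: contra hk => /eqP e; apply/eqP/val_inj.
by rewrite mul0r.
Qed.

Lemma sum_ind1 (R : realFieldType) (N m : nat) : (m < N)%N ->
  \sum_(k < N) ((val k == m) : nat)%:R = 1 :> R.
Proof.
move=> hm; rewrite -[RHS](sum_ind (fun _ => 1) hm).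
by apply: eq_bigr => k _; rewrite mulr1.
Qed.

Lemma sum_lt (R : realFieldType) (N j : nat) (G : nat -> R) : (j <= N)%N ->
  \sum_(k < N) ((val k < j)%N : nat)%:R * G (val k) = \sum_(0 <= k < j) G k.
Proof.
move=> hj; rewrite -(big_mkord xpredT (fun k => ((k < j)%N : nat)%:R * G k)).
rewrite (@big_cat_nat _ _ _ j) //=.
have -> : \sum_(j <= i < N) ((i < j)%N : nat)%:R * G i = 0.
  rewrite big_nat_cond big1 // => i /andP[/andP[hi _] _].
  by rewrite ltnNge hi mul0r.
by rewrite addr0; apply: eq_big_nat => i /andP[_ hi]; rewrite hi mul1r.
Qed.

Lemma gauss (R : realFieldType) (m : nat) :
  2%:R * \sum_(0 <= k < m) (k%:R : R) = m%:R * (m%:R - 1).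
Proof.
elim: m => [|m IH]; first by rewrite big_geq // mulr0 mul0r.
rewrite big_nat_recr //= mulrDr IH -[m.+1]addn1 natrD; ring.
Qed.

Lemma pact_sum (R : realFieldType) (n : nat) (p : 'I_n.+1 -> 'I_n.+1) (v : hs R n) :
  injective p -> Ssum (pact p v) = Ssum v.
Proof.
move=> hp; rewrite /Ssum /pact /= [RHS](reindex_inj hp) /=.
by apply: eq_bigr => k _; rewrite mxE.
Qed.

Definition wp (n j : nat) : 'I_n.+1 -> 'I_n.+1 := fun k : 'I_n.+1 =>
  inord (if (val k < j)%N then (j.-1 - val k)%N else (j + n - val k)%N).
Arguments wp : clear implicits.

Lemma wp_val (n j : nat) (k : 'I_n.+1) : (j <= n.+1)%N ->
  val (wp n j k) = (if (val k < j)%N then (j.-1 - val k)%N else (j + n - val k)%N).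
Proof.
move=> hj; rewrite /wp /= inordK //; have := ltn_ord k; case: ifP; lia.
Qed.

Lemma wp_inj (n j : nat) : (j <= n.+1)%N -> injective (wp n j).
Proof.
move=> hj k l /(congr1 val); rewrite !wp_val //= => e; apply: ord_inj.
move: e; have := ltn_ord k; have := ltn_ord l; case: (ltnP k j); case: (ltnP l j); lia.
Qed.

Lemma S_hadd (R : realFieldType) (n : nat) (u v : hs R n) : Ssum (hadd u v) = Ssum u + Ssum v.
Proof. by rewrite /Ssum /= -big_split; apply: eq_bigr => k _; rewrite mxE. Qed.

Lemma S_hscale (R : realFieldType) (n : nat) c (u : hs R n) : Ssum (hscale c u) = c * Ssum u.
Proof. by rewrite /Ssum /= mulr_sumr; apply: eq_bigr => k _; rewrite mxE. Qed.

Lemma S_alpha (R : realFieldType) (n i : nat) : (i <= n)%N -> Ssum (alpha R n i) = 0.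
Proof.
move=> hi; rewrite /Ssum /alpha; case: eqP => hi0 /=.
  rewrite (eq_bigr (fun k : 'I_n.+1 => - (((val k == 0%N) : nat)%:R - ((val k == n) : nat)%:R)));
   last by move=> k _; rewrite !mxE.
  by rewrite sumrN sumrB !sum_ind1 // subrr oppr0.
rewrite (eq_bigr (fun k : 'I_n.+1 => (((val k == i.-1) : nat)%:R - ((val k == i) : nat)%:R)));
   last by move=> k _; rewrite !mxE.
rewrite sumrB !sum_ind1 ?subrr //; lia.
Qed.

Lemma hL_alpha (R : realFieldType) (n i : nat) : hL (alpha R n i) = 0.
Proof. by rewrite /alpha; case: eqP. Qed.

Lemma sref_inv (R : realFieldType) (n i : nat) (v : hs R n) : (i <= n)%N ->
  Inv v -> Inv (sref i v).
Proof.
move=> hi [h1 h2]; split.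
  by rewrite /sref /hsub /= hL_alpha !mulr0 addr0.
by rewrite /sref /hsub S_hadd !S_hscale S_alpha // h2 !mulr0 addr0.
Qed.

Lemma inW_inv (R : realFieldType) (n : nat) (w : hs R n -> hs R n) (v : hs R n) :
  inW w -> Inv v -> Inv (w v).
Proof.
case=> l [hl ->] hv; elim: l hl => [|i l IH] //= /andP[hi hl].
exact: sref_inv (IH hl).
Qed.

Lemma transl_inv (R : realFieldType) (n : nat) (x : 'rV[R]_n.+1) (v : hs R n) :
  \sum_(k < n.+1) x 0 k = 0 -> Inv v -> Inv (transl x v).
Proof.
move=> hsx [h1 h2]; split => //.
rewrite /Ssum /= (eq_bigr (fun k => hx v 0 k + hL v * x 0 k)); last by move=> k _; rewrite !mxE.
by rewrite big_split /= -mulr_sumr hsx mulr0 addr0.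
Qed.

Lemma omega_sum (R : realFieldType) (n j : nat) : (j <= n.+1)%N ->
  \sum_(k < n.+1) omega R n j 0 k = 0.
Proof.
move=> hj; rewrite (eq_bigr (fun k : 'I_n.+1 => ((val k < j)%N : nat)%:R * 1 - j%:R / (n.+1)%:R));
   last by move=> k _; rewrite !mxE mulr1.
rewrite sumrB (sum_lt (fun _ => 1)) // sumr_const card_ord sumr_const_nat subn0.
by rewrite -[X in _ - X]mulr_natr divfK ?subrr // pnatr_eq0.
Qed.

Lemma sigma_Inv (R : realFieldType) (n j : nat) (v : hs R n) : (j <= n.+1)%N ->
  Inv v -> Inv (sigma j v).
Proof.
move=> hj [h1 h2]; rewrite /sigma /=; apply: transl_inv; first exact: omega_sum.
split => //.
change (Ssum (pact (wp n j) (w0 v)) = 0).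
rewrite (@pact_sum R n (wp n j) (w0 v)); last exact: wp_inj.
rewrite /w0 (@pact_sum R n (@rev_ord n.+1) v) //; exact: rev_ord_inj.
Qed.

Lemma sigma_inv_Inv (R : realFieldType) (n j : nat) (v : hs R n) : (j <= n.+1)%N ->
  Inv v -> Inv (sigma_inv j v).
Proof.
move=> hj hv; rewrite /sigma_inv /=.
have [h1 h2] : Inv (transl (- omega R n j) v).
  apply: transl_inv hv.
  rewrite (eq_bigr (fun k => - omega R n j 0 k)); last by move=> k _; rewrite mxE.
  by rewrite sumrN omega_sum // oppr0.
split => //.
change (Ssum (pact (@rev_ord n.+1) (pact (wp n j) (transl (- omega R n j) v))) = 0).
rewrite (@pact_sum R n (@rev_ord n.+1)); last exact: rev_ord_inj.
by rewrite (@pact_sum R n (wp n j)) //; exact: wp_inj.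
Qed.

Lemma phi_hscale0 (R : realFieldType) (n : nat) (phi : hs R n -> R) :
  is_rho_check phi -> phi (HS 0 0 0) = 0.
Proof.
case=> _ hsc0 _.
have -> : HS (0:'rV[R]_n.+1) 0 0 = hscale 0 (Lambda0 R n) by rewrite /hscale /= scale0r !mul0r.
by rewrite hsc0 mul0r.
Qed.

Lemma decomp (R : realFieldType) (n : nat) (phi : hs R n -> R) :
  is_rho_check phi -> forall t, (t <= n)%N -> forall x : 'rV[R]_n.+1,
  \sum_(k < n.+1) x 0 k = 0 -> (forall k : 'I_n.+1, (nat_of_ord k < n - t)%N -> x 0 k = 0) ->
  phi (HS x 0 0) = - \sum_(k < n.+1) (nat_of_ord k)%:R * x 0 k.
Proof.
move=> hphi; elim=> [|t IH] ht x hsum hz.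
  have hxn : x 0 ord_max = 0.
    move: hsum; rewrite (bigD1 ord_max) //= big1 ?addr0 // => k hk.
    apply: hz; rewrite subn0; have := ltn_ord k.
    have : nat_of_ord k != n by apply: contra hk => /eqP e; apply/eqP/ord_inj.
    lia.
  have -> : x = 0.
    apply/rowP => k; rewrite mxE.
    case: (ltnP (nat_of_ord k) n) => hk; first by apply: hz; rewrite subn0.
    have -> : k = ord_max by apply: ord_inj => /=; have := ltn_ord k; lia.
    exact: hxn.
  rewrite phi_hscale0 // big1 ?oppr0 // => k _; rewrite mxE mulr0 //.
set m := (n - t.+1)%N.
have hm : (m < n)%N by rewrite /m; lia.
set c := x 0 (inord m).
set a := hx (alpha R n m.+1).
have ha : forall k : 'I_n.+1, a 0 k = ((nat_of_ord k == m) : nat)%:R - ((nat_of_ord k == m.+1) : nat)%:R.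
  by move=> k; rewrite /a /alpha /= mxE.
have hsa : \sum_(k < n.+1) a 0 k = 0 by exact: (S_alpha R (i:=m.+1)).
set x' := x - c *: a.
have hx' : forall k, x' 0 k = x 0 k - c * a 0 k by move=> k; rewrite !mxE.
have -> : HS x 0 0 = hadd (HS x' 0 0) (hscale c (alpha R n m.+1)).
  rewrite /hadd /hscale /=; congr HS.
  - by rewrite -/a /x' subrK.
  - by rewrite /alpha /= mulr0 addr0.
  - by rewrite /alpha /= mulr0 addr0.
case: hphi => hadd_ hsc hal.
rewrite hadd_ hsc hal // mulr1.
rewrite (IH _ x'); first last.
- move=> k hk; rewrite hx' ha.
  case: (ltnP (nat_of_ord k) m) => hkm.
    rewrite hz; last by rewrite -/m.
    have -> : (nat_of_ord k == m) = false by apply/negbTE; rewrite neq_ltn hkm.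
    have -> : (nat_of_ord k == m.+1) = false by apply/negbTE; rewrite neq_ltn ltnS ltnW.
    by rewrite subrr mulr0 subrr.
  have ekm : nat_of_ord k = m by move: hk; rewrite /m; lia.
  have -> : k = inord m by apply: ord_inj; rewrite inordK ?ekm //; lia.
  rewrite inordK; last by lia.
  rewrite eqxx (ltn_eqF (ltnSn m)) /=. by rewrite subr0 mulr1 subrr.
- rewrite (eq_bigr (fun k => x 0 k - c * a 0 k)); last by move=> k _; rewrite hx'.
  by rewrite sumrB -mulr_sumr hsa hsum mulr0 subrr.
- lia.
- rewrite [in RHS](eq_bigr (fun k : 'I_n.+1 => (nat_of_ord k)%:R * x' 0 k + c * (((nat_of_ord k == m) : nat)%:R * (nat_of_ord k)%:R - ((nat_of_ord k == m.+1) : nat)%:R * (nat_of_ord k)%:R))); last first.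
    move=> k _; rewrite hx' ha; ring.
  rewrite big_split /= -mulr_sumr sumrB.
  rewrite (sum_ind (fun k => k%:R)) ?(sum_ind (fun k => k%:R)) //; last by lia.
  have -> : (m.+1)%:R = m%:R + 1 :> R by rewrite -addn1 natrD.
  ring.
Qed.

Lemma theta_E (R : realFieldType) (n : nat) (k : 'I_n.+1) :
  theta R n 0 k = ((nat_of_ord k == 0%N) : nat)%:R - ((nat_of_ord k == n) : nat)%:R.
Proof. by rewrite mxE. Qed.

Lemma phi_delta (R : realFieldType) (n : nat) (phi : hs R n -> R) :
  is_rho_check phi -> phi (delta R n) = (n.+1)%:R.
Proof.
move=> hphi.
have -> : delta R n = hadd (alpha R n 0) (HS (theta R n) 0 0).
  by rewrite /delta /hadd /alpha /=; congr HS; rewrite ?addNr ?addr0.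
have hth := decomp hphi (leqnn n) (x := theta R n).
case: hphi => hadd_ _ hal; rewrite hadd_ hal // hth.
- rewrite (eq_bigr (fun k : 'I_n.+1 => ((nat_of_ord k == 0%N) : nat)%:R * (nat_of_ord k)%:R
     - ((nat_of_ord k == n) : nat)%:R * (nat_of_ord k)%:R)); last first.
    by move=> k _; rewrite theta_E; ring.
  rewrite sumrB (sum_ind (fun k => k%:R)) // (sum_ind (fun k => k%:R)) //.
  by rewrite -addn1 natrD; ring.
- rewrite (eq_bigr (fun k : 'I_n.+1 => ((nat_of_ord k == 0%N) : nat)%:R - ((nat_of_ord k == n) : nat)%:R)); last first.
    by move=> k _; rewrite theta_E.
  by rewrite sumrB !sum_ind1 // subrr.
- by move=> k; rewrite subnn.
Qed.

Definition Psi {R : realFieldType} {n : nat} (v : hs R n) : R :=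
  \sum_(k < n.+1) (nat_of_ord k)%:R * hx v 0 k - (n.+1)%:R * hd v.

Lemma phi_L (R : realFieldType) (n : nat) (phi : hs R n -> R) (v : hs R n) :
  is_rho_check phi -> Inv v -> phi (hsub (Lambda0 R n) v) = Psi v.
Proof.
move=> hphi [h1 h2].
have -> : hsub (Lambda0 R n) v = hadd (HS (- hx v) 0 0) (hscale (- hd v) (delta R n)).
  rewrite /hsub /hadd /hscale /Lambda0 /delta /= h1; congr HS; rewrite ?scaleN1r ?scaler0 ?add0r ?addr0 //; ring.
have hd_ := decomp hphi (leqnn n) (x := - hx v).
have hdel := phi_delta hphi.
case: hphi => hadd_ hsc _; rewrite hadd_ hsc hdel hd_.
- rewrite /Psi (eq_bigr (fun k : 'I_n.+1 => - ((nat_of_ord k)%:R * hx v 0 k))); last first.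
    by move=> k _; rewrite mxE mulrN.
  by rewrite sumrN opprK; ring.
- rewrite (eq_bigr (fun k : 'I_n.+1 => - hx v 0 k)); last by move=> k _; rewrite mxE.
  by rewrite sumrN; move: h2; rewrite /Ssum => ->; rewrite oppr0.
- by move=> k; rewrite subnn.
Qed.

Definition hh (n j : nat) (k : 'I_n.+1) : 'I_n.+1 := rev_ord (wp n j k).
Arguments hh : clear implicits.

Lemma hh_inj (n j : nat) : (j <= n.+1)%N -> injective (hh n j).
Proof. by move=> hj k l /rev_ord_inj /(wp_inj hj). Qed.

Lemma hh_val (n j : nat) (k : 'I_n.+1) : (j <= n.+1)%N ->
  (nat_of_ord (hh n j k) + j = nat_of_ord k + n.+1 * ((nat_of_ord k < j)%N : nat))%N.
Proof.
move=> hj; rewrite /hh /=; have := wp_val k hj; rewrite /= => ->.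
have := ltn_ord k; case: (ltnP (nat_of_ord k) j) => /= hk; lia.
Qed.

Lemma gauss2 (R : realFieldType) (m : nat) :
  \sum_(0 <= k < m) (k%:R : R) = m%:R * (m%:R - 1) / 2%:R.
Proof. by rewrite -gauss; field. Qed.

Lemma omega_id (R : realFieldType) (n j : nat) : (j <= n.+1)%N ->
  \sum_(k < n.+1) (nat_of_ord k)%:R * omega R n j 0 k
  + (n.+1)%:R / 2%:R * \sum_(k < n.+1) omega R n j 0 k * omega R n j 0 k = 0 :> R.
Proof.
move=> hj.
set N : R := (n.+1)%:R.
have hN : N != 0 by rewrite pnatr_eq0.
rewrite (eq_bigr (fun k : 'I_n.+1 => ((nat_of_ord k < j)%N : nat)%:R * (nat_of_ord k)%:R
   - j%:R / N * (nat_of_ord k)%:R)); last first.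
  by move=> k _; rewrite mxE; ring.
rewrite [X in _ + _ * X](eq_bigr (fun k : 'I_n.+1 => ((nat_of_ord k < j)%N : nat)%:R * (1 - 2%:R * j%:R / N)
   + (j%:R / N) ^+ 2)); last first.
  by move=> k _; rewrite mxE; case: (nat_of_ord k < j)%N => /=; rewrite -/N; ring.
rewrite sumrB big_split /= -mulr_sumr (sum_lt (fun k => k%:R)) //.
rewrite (sum_lt (fun _ => 1 - 2%:R * j%:R / N)) // sumr_const card_ord.
rewrite -(big_mkord xpredT (fun k => (k%:R : R))) !gauss2 sumr_const_nat subn0.
rewrite -/N.
field; by rewrite addrC natr1 pnatr_eq0.
Qed.

Lemma Psi_sigma (R : realFieldType) (n j : nat) (v : hs R n) : (j <= n.+1)%N ->
  Inv v -> Psi (sigma j v) = Psi v.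
Proof.
move=> hj [h1 h2].
set y := hx v; set om := omega R n j; set N : R := (n.+1)%:R.
have Ex : forall k, hx (sigma j v) 0 k = y 0 (hh n j k) + om 0 k.
  by move=> k; rewrite /sigma /= !mxE h1 mul1r.
have Ed : hd (sigma j v) = hd v - (\sum_(k < n.+1) y 0 (hh n j k) * om 0 k
     + 2%:R^-1 * (\sum_(k < n.+1) om 0 k * om 0 k) * 1).
  rewrite /sigma /= /dot h1; congr (_ - (_ + _)).
  by apply: eq_bigr => k _; rewrite !mxE.
have Sy : \sum_(k < n.+1) y 0 (hh n j k) = 0.
  by move: h2; rewrite /Ssum (reindex_inj (hh_inj hj)).
have Kx : \sum_(k < n.+1) (nat_of_ord k)%:R * y 0 (hh n j k)
   + N * \sum_(k < n.+1) ((nat_of_ord k < j)%N : nat)%:R * y 0 (hh n j k)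
   = \sum_(k < n.+1) (nat_of_ord k)%:R * y 0 k.
  transitivity (\sum_(k < n.+1) ((nat_of_ord k)%:R + j%:R) * y 0 k).
    rewrite [RHS](reindex_inj (hh_inj hj)) /= mulr_sumr -big_split /=.
    apply: eq_bigr => k _; rewrite -natrD hh_val // natrD natrM /N; ring.
  rewrite (eq_bigr (fun k : 'I_n.+1 => (nat_of_ord k)%:R * y 0 k + j%:R * y 0 k)); last first.
    by move=> k _; ring.
  by rewrite big_split /= -mulr_sumr; move: h2; rewrite /Ssum -/y => ->; rewrite mulr0 addr0.
have Cx : \sum_(k < n.+1) y 0 (hh n j k) * om 0 k
   = \sum_(k < n.+1) ((nat_of_ord k < j)%N : nat)%:R * y 0 (hh n j k).
  rewrite (eq_bigr (fun k : 'I_n.+1 => ((nat_of_ord k < j)%N : nat)%:R * y 0 (hh n j k)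
     - j%:R / N * y 0 (hh n j k))); last by move=> k _; rewrite /om mxE; ring.
  by rewrite sumrB -mulr_sumr Sy mulr0 subr0.
have Oid := omega_id R hj; rewrite -/om -/N in Oid.
rewrite /Psi Ed Cx -/y -/N.
rewrite (eq_bigr (fun k : 'I_n.+1 => (nat_of_ord k)%:R * y 0 (hh n j k)
     + (nat_of_ord k)%:R * om 0 k)); last by move=> k _; rewrite Ex mulrDr.
rewrite big_split /= -Kx.
set B := \sum_(k < n.+1) _ * om 0 k in Oid *.
set D := \sum_(k < n.+1) om 0 k * om 0 k in Oid *.
have -> : B = - (N / 2%:R * D) by apply/eqP; rewrite -addr_eq0; apply/eqP.
ring.
Qed.

Lemma Inv_Lambda0 (R : realFieldType) (n : nat) : Inv (Lambda0 R n).
Proof. by split => //; rewrite /Ssum big1 // => k _; rewrite mxE. Qed.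

Lemma iter_lem (R : realFieldType) (n : nat) (w : hs R n -> hs R n) (k : nat) :
  Inv (w (Lambda0 R n)) ->
  Inv (iter k (fun g => sigma 1 \o g) w (Lambda0 R n)) /\
  Psi (iter k (fun g => sigma 1 \o g) w (Lambda0 R n)) = Psi (w (Lambda0 R n)).
Proof.
move=> hw; elim: k => [|k [IH1 IH2]] //=.
split; first exact: sigma_Inv.
by rewrite Psi_sigma.
Qed.

Theorem theorem4p7 (R : realFieldType) (n : nat) (phi : hs R n -> R)
    (hphi : is_rho_check phi) (w : hs R n -> hs R n) (hw : inW w)
    (j : nat) (hj : (1 <= j <= n)%N) :
  (atomic_length phi w = atomic_length phi (sigma j \o w) /\
   atomic_length phi (sigma j \o w) =
     atomic_length phi (iter j (fun g => sigma 1 \o g) w)) /\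
  atomic_length_ext phi w j = atomic_length phi (pi_ j w).
Proof.
have hj' : (j <= n.+1)%N by case/andP: hj => _ h; exact: leqW.
have hw0 : Inv (w (Lambda0 R n)) := inW_inv hw (Inv_Lambda0 R n).
have [hi1 hi2] := iter_lem j hw0.
rewrite /atomic_length_ext /atomic_length /=.
have hu : Inv (pi_ j w (Lambda0 R n)).
  rewrite /pi_ /=; apply: sigma_inv_Inv => //; apply: inW_inv hw _.
  exact: sigma_Inv (Inv_Lambda0 R n).
split; first split.
- by rewrite !phi_L // ?Psi_sigma //; exact: sigma_Inv.
- by rewrite !phi_L // ?Psi_sigma // ?hi2 //; exact: sigma_Inv.
- by rewrite !phi_L // ?Psi_sigma //; exact: sigma_Inv.
Qed.
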